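(* Fix $N\ge 1$, $L>0$, $\alpha>0$, $p>0$, $\lambda_e>0$ and $\epsilon\in(0,1)$. Let $K_1=\pi\lambda_e\Gamma(\frac{2}{\alpha}+1)$, $K_4=\frac{N\left[(L/N)^\alpha+1\right]}{p}$, and $$R_e^{*}=\log_2\!\left[\frac{2p}{\alpha}\,W_0\!\left(\frac{\alpha}{2}\left[\frac{\ln\frac{1}{1-\epsilon}}{NK_1}\right]^{-\alpha/2}\right)+1\right].$$ Then the function $$\mathbb{U}(R_t)=\frac{(R_t-R_e^* )\exp\!\left[-K_4\left(2^{R_t}-1\right)\right]}{N},\qquad R_t>R_e^*,$$ is quasi-concave with unique maximizer $R_t^*=R_e^*+\frac{1}{\ln2}W_0\!\left(\frac{2^{-R_e^*}}{K_4}\right)$, and consequently the non-on-off-transmission throughput $\mathbb{U}_{\mathrm{NOFT}}=\mathcal{P}_cR_s/N$ is maximized over all $(R_t,R_s)$ with $R_t\ge R_s>0$ and $\mathcal{P}_{\mathrm{so}}\le\epsilon$ by $R_t=R_t^*$ and $$R_s=R_s^*=\frac{1}{\ln2}W_0\!\left(\frac{2^{-R_e^*}}{K_4}\right).$$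
   Context: Setup (linear multihop network). Source and destination are at distance $L$, connected by $N$ equal-length hops of length $L/N$. Fix path-loss exponent $\alpha>0$, transmitter-side SNR $p>0$, eavesdropper density $\lambda_e>0$. Legitimate hop $n$ has received SNR $\mathrm{SNR}_n=\frac{pH_n}{(L/N)^\alpha+1}$ with $H_n$ i.i.d. exponential of mean 1. For each hop $n$, eavesdroppers form independent homogeneous Poisson point processes $\Phi_{ne}$ of intensity $\lambda_e$ on $\mathbb{R}^2$; eavesdropper $e\in\Phi_{ne}$ has SNR $pS_{ne}/(|X_{ne}|^\alpha+1)$, with $|X_{ne}|$ its distance to the hop-$n$ transmitter and $S_{ne}$ i.i.d. Exp(1) independent of everything. Wiretap code rates $R_t\ge R_s>0$, $R_e=R_t-R_s$, $\beta_t=2^{R_t}-1$, $\beta_e=2^{R_e}-1$. The end-to-end secrecy outage probability is $\mathcal{P}_{\mathrm{so}}=\mathbb{P}(\max_n\max_{e\in\Phi_{ne}}\mathrm{SNR}_{ne}>\beta_e)=1-\exp[-NK_1(\beta_e/p)^{-2/\alpha}e^{-\beta_e/p}]$. Non-on-off transmission (NOFT): every hop always transmits; the end-to-end connection probability is $\mathcal{P}_c=\mathbb{P}(\min_n\mathrm{SNR}_n>\beta_t)=\exp[-N\beta_t((L/N)^\alpha+1)/p]$, and the secure transmission throughput is $\mathbb{U}_{\mathrm{NOFT}}=\mathcal{P}_cR_s/N$. $W_0$ denotes the principal branch of the Lambert W function. *)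

(* Defs.v *)
From Stdlib Require Import Reals Lra ClassicalEpsilon Factorial.
Open Scope R_scope.

(* Principal branch of the Lambert W function: for y >= -1/e, W0 y is the
   unique w >= -1 with w * exp w = y (chosen by Hilbert's epsilon). *)
Definition W0 (y : R) : R :=
  epsilon (inhabits 0) (fun w => -1 <= w /\ w * exp w = y).

Definition log2 (x : R) : R := ln x / ln 2.

(* Euler's limit formula for the Gamma function:
   Gamma x = lim_n n! n^x / (x (x+1) ... (x+n)),  x > 0. *)
Fixpoint rising_prod (x : R) (n : nat) : R :=
  match n with
  | O => x
  | S m => rising_prod x m * (x + INR (S m))
  end.

Definition Gamma_seq (x : R) (n : nat) : R :=
  INR (fact n) * Rpower (INR n) x / rising_prod x n.

Definition is_Gamma (x g : R) : Prop := Un_cv (Gamma_seq x) g.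

Definition K4 (N : nat) (L alpha p : R) : R :=
  INR N * (Rpower (L / INR N) alpha + 1) / p.

Definition Re_star (N : nat) (alpha p K1 eps : R) : R :=
  log2 (2 * p / alpha *
        W0 (alpha / 2 * Rpower (ln (1 / (1 - eps)) / (INR N * K1)) (- alpha / 2))
        + 1).

Definition U_fun (N : nat) (L alpha p K1 eps Rt : R) : R :=
  (Rt - Re_star N alpha p K1 eps)
  * exp (- K4 N L alpha p * (Rpower 2 Rt - 1)) / INR N.

(* end-to-end secrecy outage probability, beta_e = 2^{Rt-Rs} - 1.
   For beta_e = 0 (R_t = R_s) the outage probability equals 1
   (limit of the closed form as beta_e -> 0+). *)
Definition P_so (N : nat) (alpha p K1 Rt Rs : R) : R :=
  let be := Rpower 2 (Rt - Rs) - 1 in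
  if Rlt_dec 0 be then
    1 - exp (- INR N * K1 * Rpower (be / p) (- (2 / alpha)) * exp (- (be / p)))
  else 1.

Definition P_c (N : nat) (L alpha p Rt : R) : R :=
  exp (- INR N * (Rpower 2 Rt - 1) * (Rpower (L / INR N) alpha + 1) / p).

Definition U_NOFT (N : nat) (L alpha p Rt Rs : R) : R :=
  P_c N L alpha p Rt * Rs / INR N.

Definition quasi_concave_on (D : R -> Prop) (f : R -> R) : Prop :=
  forall x y t, D x -> D y -> 0 <= t <= 1 ->
    Rmin (f x) (f y) <= f (t * x + (1 - t) * y).

(* Main.v *)
Require Import Defs.
From Stdlib Require Import Reals Lra Lia ClassicalEpsilon Factorial.
Open Scope R_scope.

Lemma ln_le_sub1 z : 0 < z -> ln z <= z - 1.
Proof. intro Hz. pose proof (exp_ineq1_le (ln z)). rewrite exp_ln in H; lra. Qed.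

Lemma ln_lt_sub1 z : 0 < z -> z <> 1 -> ln z < z - 1.
Proof.
  intros Hz H1. assert (ln z <> 0).
  { intro E. apply H1. rewrite <- (exp_ln z Hz), E. apply exp_0. }
  pose proof (exp_ineq1 (ln z) H). rewrite exp_ln in H0; lra.
Qed.

Lemma W0_spec y : 0 < y -> 0 < W0 y /\ W0 y * exp (W0 y) = y.
Proof.
  intro Hy.
  assert (Ex : exists w, -1 <= w /\ w * exp w = y).
  { destruct (IVT (fun w => w * exp w - y) 0 y) as [z [Hz1 Hz2]].
    - apply continuity_minus; [|apply continuity_const; intros ? ?; reflexivity].
      apply continuity_mult; [apply derivable_continuous, derivable_id|].
      apply derivable_continuous, derivable_exp.
    - exact Hy.
    - rewrite Rmult_0_l. lra.
    - pose proof (exp_ineq1 y). assert (y <> 0) by lra. specialize (H H0).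
      nra.
    - exists z. split; lra. }
  pose proof (epsilon_spec (inhabits 0) _ Ex) as [H1 H2].
  unfold W0. split; [|exact H2].
  pose proof (exp_pos (epsilon (inhabits 0) (fun w : R => -1 <= w /\ w * exp w = y))).
  nra.
Qed.

Lemma Gamma_seq_pos x n : 0 < x -> (1 <= n)%nat -> 0 < Gamma_seq x n.
Proof.
  intros Hx Hn. unfold Gamma_seq.
  assert (0 < rising_prod x n).
  { clear Hn. induction n; cbn [rising_prod]. lra. pose proof (pos_INR (S n)). nra. }
  unfold Rdiv. apply Rmult_lt_0_compat; [|apply Rinv_0_lt_compat; lra].
  apply Rmult_lt_0_compat; [apply INR_fact_lt_0|unfold Rpower; apply exp_pos].
Qed.

Lemma Gamma_seq_incr x n : 0 < x -> (1 <= n)%nat -> Gamma_seq x n <= Gamma_seq x (S n).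
Proof.
  intros Hx Hn. unfold Gamma_seq.
  assert (Hr : 0 < rising_prod x n).
  { clear Hn. induction n; cbn [rising_prod]. lra. pose proof (pos_INR (S n)). nra. }
  change (rising_prod x (S n)) with (rising_prod x n * (x + INR (S n))).
  change (fact (S n)) with (S n * fact n)%nat. rewrite mult_INR.
  assert (Hn0 : 0 < INR n) by (apply lt_0_INR; lia).
  rewrite S_INR. set (F := INR (fact n)).
  assert (HF : 0 < F) by apply INR_fact_lt_0.
  unfold Rpower. set (a := exp (x * ln (INR n))).
  assert (Ha : 0 < a) by apply exp_pos.
  assert (Hb : exp (x * ln (INR n + 1)) >= a * (1 + x / (INR n + 1))).
  { replace (x * ln (INR n + 1)) with (x * ln (INR n) + x * (ln (INR n + 1) - ln (INR n))) by ring.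
    rewrite exp_plus. fold a.
    assert (ln (INR n + 1) - ln (INR n) >= / (INR n + 1)).
    { replace (ln (INR n + 1) - ln (INR n)) with (- ln (INR n / (INR n + 1))).
      2:{ unfold Rdiv; rewrite ln_mult, ln_Rinv; try lra. apply Rinv_0_lt_compat; lra. }
      pose proof (ln_le_sub1 (INR n / (INR n + 1))).
      assert (0 < INR n / (INR n + 1)) by (apply Rdiv_lt_0_compat; lra).
      specialize (H H0).
      replace (INR n / (INR n + 1) - 1) with (- / (INR n + 1)) in H by (field; lra). lra. }
    pose proof (exp_ineq1_le (x * (ln (INR n + 1) - ln (INR n)))).
    apply Rle_ge. apply Rmult_le_compat_l; [lra|].
    unfold Rdiv. assert (x * (ln (INR n + 1) - ln (INR n)) >= x * / (INR n + 1)) by nra. lra. }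
  set (b := exp (x * ln (INR n + 1))) in *.
  set (r := rising_prod x n) in *.
  assert (E : (INR n + 1) * F * b / (r * (x + (INR n + 1))) - F * a / r
     = F / (r * (x + (INR n + 1))) * ((INR n + 1) * b - a * (x + (INR n + 1)))) by (field; lra).
  assert (E2 : (INR n + 1) * (a * (1 + x / (INR n + 1))) = a * (x + (INR n + 1))) by (field; lra).
  assert (0 <= F / (r * (x + (INR n + 1)))).
  { left. apply Rdiv_lt_0_compat; nra. }
  assert (0 <= (INR n + 1) * b - a * (x + (INR n + 1))) by nra.
  nra.
Qed.

Lemma Gamma_pos x g : 0 < x -> is_Gamma x g -> 0 < g.
Proof.
  intros Hx Hg.
  assert (Hmono : forall n, (1 <= n)%nat -> Gamma_seq x 1 <= Gamma_seq x n).
  { intros n Hn. induction n. lia. destruct (Nat.eq_dec n 0). subst. lra.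
    pose proof (Gamma_seq_incr x n Hx ltac:(lia)). specialize (IHn ltac:(lia)). lra. }
  pose proof (Gamma_seq_pos x 1 Hx (le_n 1)).
  destruct (Rlt_or_le 0 g) as [|Hle]; [assumption|exfalso].
  destruct (Hg (Gamma_seq x 1 - g)) as [M HM]. lra.
  specialize (HM (max M 1) (Nat.le_max_l _ _)). unfold R_dist in HM.
  specialize (Hmono (max M 1) (Nat.le_max_r _ _)).
  pose proof (RRle_abs (Gamma_seq x (max M 1) - g)). lra.
Qed.

Lemma ln2_pos : 0 < ln 2.
Proof. pose proof ln_lt_2. lra. Qed.

Lemma tangent r0 K x m : 0 < K -> r0 < x -> r0 < m ->
  ln (x - r0) - K * exp (x * ln 2) <=
  ln (m - r0) - K * exp (m * ln 2) + (/ (m - r0) - K * ln 2 * exp (m * ln 2)) * (x - m)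
  /\ (x <> m -> ln (x - r0) - K * exp (x * ln 2) <
  ln (m - r0) - K * exp (m * ln 2) + (/ (m - r0) - K * ln 2 * exp (m * ln 2)) * (x - m)).
Proof.
  intros HK Hx Hm. pose proof ln2_pos.
  assert (Eln : ln (x - r0) = ln (m - r0) + ln ((x - r0) / (m - r0))).
  { unfold Rdiv. rewrite ln_mult, ln_Rinv; try lra. apply Rinv_0_lt_compat; lra. }
  assert (Eq : (x - r0) / (m - r0) - 1 = / (m - r0) * (x - m)) by (field; lra).
  assert (Hq : 0 < (x - r0) / (m - r0)) by (apply Rdiv_lt_0_compat; lra).
  pose proof (ln_le_sub1 _ Hq) as L1.
  assert (Eexp : exp (x * ln 2) = exp (m * ln 2) * exp ((x - m) * ln 2)).
  { rewrite <- exp_plus. f_equal. ring. }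
  pose proof (exp_ineq1_le ((x - m) * ln 2)) as L2.
  pose proof (exp_pos (m * ln 2)) as Hem.
  assert (L2' : K * exp (m * ln 2) * (1 + (x - m) * ln 2) <= K * exp (x * ln 2)).
  { rewrite Eexp. rewrite Rmult_assoc. apply Rmult_le_compat_l; [lra|].
    apply Rmult_le_compat_l; lra. }
  split.
  - rewrite Eln. nra.
  - intro Hne. assert ((x - m) * ln 2 <> 0).
    { intro E. apply Rmult_integral in E. destruct E; lra. }
    pose proof (exp_ineq1 _ H0) as L3.
    assert (L3' : K * exp (m * ln 2) * (1 + (x - m) * ln 2) < K * exp (x * ln 2)).
    { rewrite Eexp. rewrite Rmult_assoc. apply Rmult_lt_compat_l; [lra|].
      apply Rmult_lt_compat_l; lra. }
    rewrite Eln. nra.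
Qed.

Theorem theorem3 (N : nat) (L alpha p lambda_e eps g : R)
  (hN : (1 <= N)%nat) (hL : 0 < L) (halpha : 0 < alpha) (hp : 0 < p)
  (hlam : 0 < lambda_e) (heps : 0 < eps < 1)
  (hg : is_Gamma (2 / alpha + 1) g) :
  let K1 := PI * lambda_e * g in
  let Res := Re_star N alpha p K1 eps in
  let U := U_fun N L alpha p K1 eps in
  let Rss := W0 (Rpower 2 (- Res) / K4 N L alpha p) / ln 2 in
  let Rts := Res + Rss in
  quasi_concave_on (fun Rt => Res < Rt) U /\
  Res < Rts /\
  (forall Rt, Res < Rt -> Rt <> Rts -> U Rt < U Rts) /\
  (Rss <= Rts /\ 0 < Rss /\ P_so N alpha p K1 Rts Rss <= eps) /\
  (forall Rt Rs, Rs <= Rt -> 0 < Rs -> P_so N alpha p K1 Rt Rs <= eps ->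
     U_NOFT N L alpha p Rt Rs <= U_NOFT N L alpha p Rts Rss).
Proof.
  intros K1 Res U Rss Rts.
  pose proof ln2_pos as Hln2.
  assert (hg0 : 0 < g).
  { apply (Gamma_pos (2 / alpha + 1)); [|exact hg].
    assert (0 < 2 / alpha) by (apply Rdiv_lt_0_compat; lra). lra. }
  assert (HK1 : 0 < K1) by (unfold K1; pose proof PI_RGT_0; apply Rmult_lt_0_compat; [nra|lra]).
  assert (HN0 : 0 < INR N) by (apply lt_0_INR; lia).
  set (c := ln (1 / (1 - eps))).
  assert (Hc : c = - ln (1 - eps)).
  { unfold c, Rdiv. rewrite Rmult_1_l, ln_Rinv; lra. }
  assert (Hc0 : 0 < c).
  { rewrite Hc. assert (ln (1 - eps) < ln 1) by (apply ln_increasing; lra).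
    rewrite ln_1 in H. lra. }
  set (D := c / (INR N * K1)).
  assert (HD : 0 < D) by (apply Rdiv_lt_0_compat; nra).
  set (y1 := alpha / 2 * Rpower D (- alpha / 2)).
  assert (Hy1 : 0 < y1) by (unfold y1, Rpower; pose proof (exp_pos (- alpha / 2 * ln D)); nra).
  destruct (W0_spec y1 Hy1) as [Hw1 Ew1].
  set (w1 := W0 y1) in *.
  set (bs := 2 * p / alpha * w1).
  assert (Hbs : 0 < bs) by (unfold bs; assert (0 < 2 * p / alpha) by (apply Rdiv_lt_0_compat; lra); nra).
  assert (ERes : Res = ln (bs + 1) / ln 2) by reflexivity.
  assert (HU : forall r, U r = (r - Res) * exp (- K4 N L alpha p * (exp (r * ln 2) - 1)) / INR N).
  { intro r. reflexivity. }
  clearbody U Res.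
  assert (HRes0 : 0 < Res).
  { rewrite ERes. apply Rdiv_lt_0_compat; [|lra].
    rewrite <- ln_1. apply ln_increasing; lra. }
  assert (E2Res : exp (Res * ln 2) = bs + 1).
  { rewrite ERes. replace (ln (bs + 1) / ln 2 * ln 2) with (ln (bs + 1)) by (field; lra).
    apply exp_ln. lra. }
  set (K4v := K4 N L alpha p) in *.
  assert (HK4 : K4v = INR N * (Rpower (L / INR N) alpha + 1) / p) by reflexivity.
  assert (HK40 : 0 < K4v).
  { rewrite HK4. unfold Rpower. pose proof (exp_pos (alpha * ln (L / INR N))).
    apply Rdiv_lt_0_compat; nra. }
  clearbody K4v.
  set (y2 := Rpower 2 (- Res) / K4v) in *.
  assert (Hy2 : 0 < y2) by (unfold y2, Rpower; apply Rdiv_lt_0_compat; [apply exp_pos|lra]).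
  destruct (W0_spec y2 Hy2) as [Hw2 Ew2].
  set (w2 := W0 y2) in *.
  assert (HRss0 : 0 < Rss) by (unfold Rss; apply Rdiv_lt_0_compat; lra).
  assert (ERts : Rts = Res + Rss) by reflexivity.
  assert (ERss : Rss = w2 / ln 2) by reflexivity.
  clearbody Rts Rss.
  assert (Eexp2 : exp (Rts * ln 2) = (bs + 1) * exp w2).
  { rewrite <- E2Res, <- exp_plus. f_equal. rewrite ERts, ERss. field. lra. }
  assert (Ey2 : y2 = / (bs + 1) / K4v).
  { unfold y2, Rpower. rewrite <- E2Res. replace (- Res * ln 2) with (- (Res * ln 2)) by ring.
    rewrite exp_Ropp. reflexivity. }
  clearbody y2.
  assert (Hslope : / (Rts - Res) - K4v * ln 2 * exp (Rts * ln 2) = 0).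
  { rewrite Eexp2. replace (Rts - Res) with (w2 / ln 2) by (rewrite ERts, ERss; ring).
    assert (exp w2 = y2 / w2) by (rewrite <- Ew2; field; lra).
    rewrite H, Ey2. field. repeat split; lra. }
  set (G := fun r => ln (r - Res) - K4v * exp (r * ln 2)).
  assert (HUG : forall r, Res < r -> U r = exp (G r + K4v) / INR N).
  { intros r Hr. rewrite HU. unfold G. f_equal.
    replace (ln (r - Res) - K4v * exp (r * ln 2) + K4v) with (ln (r - Res) + (- K4v * (exp (r * ln 2) - 1))) by ring.
    rewrite exp_plus, exp_ln; lra. }
  assert (Umono : forall x y, Res < x -> Res < y -> G x <= G y -> U x <= U y).
  { intros x y Hx Hy Hxy. rewrite !HUG by assumption. unfold Rdiv.
    apply Rmult_le_compat_r. left; apply Rinv_0_lt_compat; lra.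
    destruct (Rle_lt_or_eq_dec _ _ Hxy) as [Hl|He].
    left; apply exp_increasing; lra. rewrite He; lra. }
  assert (Umax : forall x, Res < x -> x <> Rts -> U x < U Rts).
  { intros x Hx Hne. rewrite !HUG by lra. unfold Rdiv.
    apply Rmult_lt_compat_r. apply Rinv_0_lt_compat; lra.
    apply exp_increasing. apply Rplus_lt_compat_r.
    destruct (tangent Res K4v x Rts HK40 Hx ltac:(lra)) as [_ T2].
    specialize (T2 Hne). rewrite Hslope in T2. unfold G. lra. }
  assert (Ha2 : 0 < 2 / alpha) by (apply Rdiv_lt_0_compat; lra).
  assert (Hh : Rpower (bs / p) (- (2 / alpha)) * exp (- (bs / p)) = D).
  { assert (Eb : bs / p = 2 / alpha * w1) by (unfold bs; field; lra).
    rewrite Eb. unfold Rpower. rewrite <- exp_plus.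
    assert (E1 : ln (2 / alpha * w1) + w1 = - alpha / 2 * ln D).
    { rewrite <- (ln_exp w1) at 2. rewrite <- ln_mult by (try apply exp_pos; nra).
      rewrite Rmult_assoc, Ew1. unfold y1. rewrite <- Rmult_assoc.
      replace (2 / alpha * (alpha / 2)) with 1 by (field; lra). rewrite Rmult_1_l.
      unfold Rpower. rewrite ln_exp. reflexivity. }
    replace (- (2 / alpha) * ln (2 / alpha * w1) + - (2 / alpha * w1))
      with (- (2 / alpha) * (ln (2 / alpha * w1) + w1)) by ring.
    rewrite E1. replace (- (2 / alpha) * (- alpha / 2 * ln D)) with (ln D) by (field; lra).
    apply exp_ln; lra. }
  assert (HcD : - INR N * K1 * D = - c) by (unfold D; field; nra).
  assert (Hexpc : exp (- c) = 1 - eps) by (rewrite Hc, Ropp_involutive; apply exp_ln; lra).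
  assert (HPc : forall r, P_c N L alpha p r = exp (- K4v * (exp (r * ln 2) - 1))).
  { intro r. unfold P_c. rewrite HK4. f_equal. unfold Rpower at 1. field. lra. }
  split; [|split; [|split; [exact Umax|split]]].
  - intros x y t Hx Hy Ht.
    set (m := t * x + (1 - t) * y).
    assert (Hm : Res < m).
    { unfold m. destruct (Rle_lt_or_eq_dec 0 t (proj1 Ht)) as [Ht0|Ht0].
      - assert (0 < t * (x - Res)) by (apply Rmult_lt_0_compat; lra).
        assert (0 <= (1 - t) * (y - Res)) by (apply Rmult_le_pos; lra). nra.
      - subst t. lra. }
    destruct (tangent Res K4v x m HK40 Hx Hm) as [Tx _].
    destruct (tangent Res K4v y m HK40 Hy Hm) as [Ty _].
    set (sl := / (m - Res) - K4v * ln 2 * exp (m * ln 2)) in *.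
    assert (Hcomb : t * G x + (1 - t) * G y <= G m).
    { unfold G. assert (E0 : t * (x - m) + (1 - t) * (y - m) = 0) by (unfold m; ring).
      apply (Rmult_le_compat_l t) in Tx; [|lra].
      apply (Rmult_le_compat_l (1 - t)) in Ty; [|lra].
      set (gm := ln (m - Res) - K4v * exp (m * ln 2)) in *.
      assert (E1 : t * (gm + sl * (x - m)) + (1 - t) * (gm + sl * (y - m)) = gm + sl * (t * (x - m) + (1 - t) * (y - m))) by ring.
      rewrite E0 in E1. lra. }
    destruct (Rle_or_lt (G x) (G y)).
    + apply Rle_trans with (U x). apply Rmin_l. apply Umono; try lra.
      assert (0 <= (1 - t) * (G y - G x)) by (apply Rmult_le_pos; lra). lra.
    + apply Rle_trans with (U y). apply Rmin_r. apply Umono; try lra.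
      assert (0 <= t * (G x - G y)) by (apply Rmult_le_pos; lra). lra.
  - lra.
  - split; [lra|split; [lra|]].
    unfold P_so; cbv zeta.
    replace (Rts - Rss) with Res by lra.
    replace (Rpower 2 Res - 1) with bs by (unfold Rpower; lra).
    destruct (Rlt_dec 0 bs); [|lra].
    rewrite Rmult_assoc, Hh, HcD, Hexpc. lra.
  - intros Rt Rs H1 H2 H3.
    unfold P_so in H3; cbv zeta in H3.
    set (be := Rpower 2 (Rt - Rs) - 1) in *.
    destruct (Rlt_dec 0 be) as [Hbe|]; [|lra].
    assert (Hbb : bs <= be).
    { destruct (Rle_or_lt bs be) as [|Hlt]; [assumption|exfalso].
      assert (Hgt : D < Rpower (be / p) (- (2 / alpha)) * exp (- (be / p))).
      { rewrite <- Hh. unfold Rpower.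
        assert (ln (be / p) < ln (bs / p)).
        { apply ln_increasing. apply Rdiv_lt_0_compat; lra.
          unfold Rdiv; apply Rmult_lt_compat_r; [apply Rinv_0_lt_compat|]; lra. }
        assert (be / p < bs / p) by (unfold Rdiv; apply Rmult_lt_compat_r; [apply Rinv_0_lt_compat|]; lra).
        apply Rmult_le_0_lt_compat; try (left; apply exp_pos); apply exp_increasing; nra. }
      assert (Hlt2 : - INR N * K1 * (Rpower (be / p) (- (2 / alpha)) * exp (- (be / p))) < - c).
      { rewrite <- HcD. rewrite !Rmult_assoc. apply Ropp_lt_contravar in Hgt.
        rewrite <- !Ropp_mult_distr_l. apply Ropp_lt_contravar.
        apply Rmult_lt_compat_l; [lra|]. apply Rmult_lt_compat_l; lra. }
      apply exp_increasing in Hlt2. rewrite Hexpc in Hlt2.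
      rewrite !Rmult_assoc in H3. rewrite !Rmult_assoc in Hlt2. lra. }
    assert (HRs : Rs <= Rt - Res).
    { destruct (Rle_or_lt Res (Rt - Rs)) as [|Hlt]; [lra|exfalso].
      assert (exp ((Rt - Rs) * ln 2) < exp (Res * ln 2)) by (apply exp_increasing; nra).
      unfold be, Rpower in Hbb. lra. }
    unfold U_NOFT. rewrite !HPc.
    replace (exp (- K4v * (exp (Rts * ln 2) - 1)) * Rss / INR N) with (U Rts)
      by (rewrite HU; f_equal; rewrite ERts; ring).
    apply Rle_trans with (U Rt).
    + rewrite HU. unfold Rdiv. apply Rmult_le_compat_r; [left; apply Rinv_0_lt_compat; lra|].
      rewrite (Rmult_comm (Rt - Res)). apply Rmult_le_compat_l; [left; apply exp_pos|lra].
    + destruct (Req_dec Rt Rts) as [->|Hne]; [lra|].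
      left. apply Umax; lra.
Qed.
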